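(* (i) For every $\mathbf A\in\mathsf{ICM}$, the ring reduct $\mathbf A^-$ is a reduced commutative ring. (ii) For every reduced commutative ring $\mathbf A$ there is $\mathbf B\in\mathsf{ICM}$ such that $\mathbf A$ is a subring of $\mathbf B^-$.
   Context: Rings are unital in the language $\{+,\cdot,-,0,1\}$; reduced means no nonzero nilpotents. A field is weakly rooted if it has characteristic $0$, or prime characteristic $p$ with every element having a $p$-th root. Weak inverse: $a^*=a^{-1}$ if $a\ne0$, $0^*=0$; weak $p$-root: $r_p(a)=\sqrt[p]{a}$ if the characteristic is $p$, else $0$. An implicitly closed field is a weakly rooted field expanded by $(\,)^*$ and all $r_p$; $\mathsf{ICM}$ is the class of algebras isomorphic to subalgebras of direct products of implicitly closed fields. For $\mathbf A\in\mathsf{ICM}$, $\mathbf A^-$ denotes its reduct to $\{+,\cdot,-,0,1\}$. *)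

(* Defs.v *)
From HB Require Import structures.
From mathcomp Require Import all_boot all_algebra.
Set Implicit Arguments. Unset Strict Implicit. Unset Printing Implicit Defensive.
Import GRing.Theory.
Local Open Scope ring_scope.

Record icAlg := ICAlg {
  ic_car :> Type;
  ic_add : ic_car -> ic_car -> ic_car;
  ic_mul : ic_car -> ic_car -> ic_car;
  ic_opp : ic_car -> ic_car;
  ic_zero : ic_car;
  ic_one : ic_car;
  ic_star : ic_car -> ic_car;
  ic_root : forall p : nat, prime p -> ic_car -> ic_car }.

Definition weakly_rooted (F : fieldType) : Prop :=
  [pchar F] =i pred0 \/
  exists p : nat, p \in [pchar F] /\ forall a : F, exists b : F, b ^+ p = a.

(* The weak inverse
   is mathcomp's field inverse (which satisfies 0^-1 = 0). *)
Record icField := ICField {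
  icf :> fieldType;
  icf_root : forall p : nat, prime p -> icf -> icf;
  icf_wr : weakly_rooted icf;
  icf_root_spec : forall (p : nat) (hp : prime p) (a : icf),
    if p \in [pchar icf] then icf_root hp a ^+ p = a else icf_root hp a = 0 }.

Definition alg_of_icField (F : icField) : icAlg :=
  @ICAlg F (@GRing.add F) (@GRing.mul F) (@GRing.opp F) 0 1
         (@GRing.inv F) (@icf_root F).

Definition prod_alg (I : Type) (A : I -> icAlg) : icAlg :=
  @ICAlg (forall i, A i)
    (fun f g i => ic_add (f i) (g i))
    (fun f g i => ic_mul (f i) (g i))
    (fun f i => ic_opp (f i))
    (fun i => ic_zero (A i))
    (fun i => ic_one (A i))
    (fun f i => ic_star (f i))
    (fun p hp f i => ic_root hp (f i)).

Definition is_hom (A B : icAlg) (h : A -> B) : Prop :=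
  (forall x y, h (ic_add x y) = ic_add (h x) (h y)) /\
  (forall x y, h (ic_mul x y) = ic_mul (h x) (h y)) /\
  (forall x, h (ic_opp x) = ic_opp (h x)) /\
  h (ic_zero A) = ic_zero B /\
  h (ic_one A) = ic_one B /\
  (forall x, h (ic_star x) = ic_star (h x)) /\
  (forall p (hp : prime p) x, h (ic_root hp x) = ic_root hp (h x)).

Definition ICM (A : icAlg) : Prop :=
  exists (I : Type) (F : I -> icField)
         (h : A -> prod_alg (fun i => alg_of_icField (F i))),
    injective h /\ is_hom h.

Definition reduct_comRing (A : icAlg) : Prop :=
  associative (@ic_add A) /\ commutative (@ic_add A) /\
  left_id (ic_zero A) (@ic_add A) /\
  left_inverse (ic_zero A) (@ic_opp A) (@ic_add A) /\
  associative (@ic_mul A) /\ commutative (@ic_mul A) /\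
  left_id (ic_one A) (@ic_mul A) /\
  left_distributive (@ic_mul A) (@ic_add A).

Definition ic_pow (A : icAlg) (x : A) (n : nat) : A := iter n (ic_mul x) (ic_one A).

Definition reduct_reduced (A : icAlg) : Prop :=
  forall (x : A) (n : nat), ic_pow x n.+1 = ic_zero A -> x = ic_zero A.

Definition reduced_ring (R : pzRingType) : Prop :=
  forall (x : R) (n : nat), x ^+ n.+1 = 0 -> x = 0.

Definition subring_embedding (R : pzRingType) (B : icAlg) (f : R -> B) : Prop :=
  injective f /\
  (forall x y, f (x + y) = ic_add (f x) (f y)) /\
  (forall x y, f (x * y) = ic_mul (f x) (f y)) /\
  (forall x, f (- x) = ic_opp (f x)) /\
  f 0 = ic_zero B /\
  f 1 = ic_one B.

(* Main.v *)
Require Import Defs.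
From HB Require Import structures.
From mathcomp Require Import all_boot all_algebra.
From mathcomp Require Import zify boolp classical_sets.
From Stdlib Require Import FunctionalExtensionality.
Set Implicit Arguments. Unset Strict Implicit. Unset Printing Implicit Defensive.
Import GRing.Theory.
Local Open Scope ring_scope.
Local Open Scope quotient_scope.


Definition rhom (R : pzRingType) (S : fieldType) (f : R -> S) : Prop :=
  (forall a b, f (a + b) = f a + f b) /\ (forall a b, f (a * b) = f a * f b) /\
  (forall a, f (- a) = - f a) /\ f 0 = 0 /\ f 1 = 1.

Section MkIcf.
Variables (F : fieldType) (wr : weakly_rooted F).

Lemma root_ex (q : nat) (a : F) :
  exists b : F, if q \in [pchar F] then b ^+ q == a else b == 0.
Proof.
case E: (q \in [pchar F]); last by exists 0.
case: wr => [h0|[p [hp hall]]]; first by move: (h0 q); rewrite E.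
have /eqP eqp : q == p by move: (pcharf_eq hp q); rewrite E.
by have [b hb] := hall a; exists b; rewrite eqp hb.
Qed.

Definition mk_root (q : nat) (_ : prime q) (a : F) : F := @xchoose F (fun b => if q \in [pchar F] then b ^+ q == a else b == 0) (root_ex q a).

Lemma mk_root_spec (q : nat) (hq : prime q) (a : F) :
  if q \in [pchar F] then mk_root hq a ^+ q = a else mk_root hq a = 0.
Proof.
have h : if q \in [pchar F] then mk_root hq a ^+ q == a else mk_root hq a == 0.
  exact: (xchooseP (root_ex q a)).
by move: h; case: ifP => _ /eqP.
Qed.

Definition mk_icf : icField := @ICField F mk_root wr mk_root_spec.
End MkIcf.
Section Perf.
Variables (F : fieldType) (p : nat).
Hypothesis hp : p \in [pchar F].

Lemma pnat_pow k : [pchar F].-nat (p ^ k)%N.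
Proof.
rewrite (eq_pnat _ (pcharf_eq hp)).
by rewrite pnatX pnat_id ?orbT // (pcharf_prime hp).
Qed.

Lemma frobD k (a b : F) : (a + b) ^+ (p ^ k)%N = a ^+ (p ^ k)%N + b ^+ (p ^ k)%N.
Proof. exact: exprDn_pchar (pnat_pow k). Qed.

Lemma frobN k (a : F) : (- a) ^+ (p ^ k)%N = - a ^+ (p ^ k)%N.
Proof. exact: exprNn_pchar (pnat_pow k). Qed.

Lemma frob_inj k (a b : F) : a ^+ (p ^ k)%N = b ^+ (p ^ k)%N -> a = b.
Proof.
move=> h; apply/eqP; rewrite -subr_eq0.
have : (a - b) ^+ (p ^ k)%N == 0 by rewrite frobD frobN h subrr.
by rewrite expf_eq0 => /andP[].
Qed.

Lemma frobM i j (a : F) : a ^+ (p ^ i)%N ^+ (p ^ j)%N = a ^+ (p ^ (i + j))%N.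
Proof. by rewrite -exprM -expnD. Qed.

Definition T := (nat * F)%type.
Definition pw (N : nat) (x : T) : F := x.2 ^+ (p ^ (N - x.1))%N.
Definition eqv (x y : T) : bool := x.2 ^+ (p ^ y.1)%N == y.2 ^+ (p ^ x.1)%N.

Lemma pw_eqv x y N : (x.1 <= N)%N -> (y.1 <= N)%N -> (eqv x y = (pw N x == pw N y)).
Proof.
move=> hx hy; apply/eqP/eqP => h.
  apply: (@frob_inj (x.1 + y.1)); rewrite /pw !frobM.
  have -> : (N - x.1 + (x.1 + y.1) = y.1 + N)%N by lia.
  have -> : (N - y.1 + (x.1 + y.1) = x.1 + N)%N by lia.
  by rewrite -!frobM h.
apply: (@frob_inj N); rewrite !frobM.
move: h; rewrite /pw => /(congr1 (fun z => z ^+ (p ^ (x.1 + y.1))%N)); rewrite !frobM.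
have -> : (N - x.1 + (x.1 + y.1) = y.1 + N)%N by lia.
by have -> : (N - y.1 + (x.1 + y.1) = x.1 + N)%N by lia.
Qed.

Lemma pw_pw x L N : (x.1 <= L)%N -> (L <= N)%N -> pw N (L, pw L x) = pw N x.
Proof.
move=> h1 h2; rewrite /pw /= frobM; congr (_ ^+ (p ^ _)%N); lia.
Qed.

Lemma eqv_refl : reflexive eqv. Proof. by move=> x; rewrite /eqv. Qed.
Lemma eqv_sym : symmetric eqv. Proof. by move=> x y; rewrite /eqv eq_sym. Qed.
Lemma eqv_trans : transitive eqv.
Proof.
move=> y x z; set N := (x.1 + y.1 + z.1)%N.
rewrite (@pw_eqv x y N) ?(@pw_eqv y z N) ?(@pw_eqv x z N) /N; try lia.
by move=> /eqP -> /eqP ->.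
Qed.

Canonical eqv_equiv := EquivRel eqv eqv_refl eqv_sym eqv_trans.
Definition K := {eq_quot eqv}.
HB.instance Definition _ : EqQuotient _ eqv K := EqQuotient.on K.
HB.instance Definition _ := Choice.on K.

Lemma eqK (x y : T) : (\pi_K x == \pi_K y) = eqv x y.
Proof. by rewrite eqmodE. Qed.

Lemma piK_eq x y N : (x.1 <= N)%N -> (y.1 <= N)%N -> pw N x = pw N y -> \pi_K x = \pi_K y.
Proof. by move=> h1 h2 h; apply/eqP; rewrite eqK (pw_eqv h1 h2) h. Qed.

Lemma repr_pw x N : (x.1 <= N)%N -> ((repr (\pi_K x)).1 <= N)%N -> pw N (repr (\pi_K x)) = pw N x.
Proof. by move=> h1 h2; apply/eqP; rewrite -pw_eqv // -eqK reprK. Qed.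

Definition addT (x y : T) : T := ((x.1 + y.1)%N, pw (x.1 + y.1) x + pw (x.1 + y.1) y).
Definition mulT (x y : T) : T := ((x.1 + y.1)%N, pw (x.1 + y.1) x * pw (x.1 + y.1) y).
Definition oppT (x : T) : T := (x.1, - x.2).
Definition invT (x : T) : T := (x.1, x.2^-1).

Lemma addT1 x y : (addT x y).1 = (x.1 + y.1)%N. Proof. by []. Qed.
Lemma mulT1 x y : (mulT x y).1 = (x.1 + y.1)%N. Proof. by []. Qed.
Lemma oppT1 x : (oppT x).1 = x.1. Proof. by []. Qed.
Lemma invT1 x : (invT x).1 = x.1. Proof. by []. Qed.
Definition lev := (addT1, mulT1, oppT1, invT1).
Arguments addT : simpl never.
Arguments mulT : simpl never.
Arguments oppT : simpl never.
Arguments invT : simpl never.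

Lemma pwE N L (a : F) : pw N (L, a) = a ^+ (p ^ (N - L))%N.
Proof. by []. Qed.

Lemma pw_add x y N : (x.1 + y.1 <= N)%N -> pw N (addT x y) = pw N x + pw N y.
Proof.
move=> h; rewrite /addT pwE frobD -!pwE !pw_pw //; lia.
Qed.

Lemma pw_mul x y N : (x.1 + y.1 <= N)%N -> pw N (mulT x y) = pw N x * pw N y.
Proof.
move=> h; rewrite /mulT pwE exprMn -!pwE !pw_pw //; lia.
Qed.

Lemma pw_opp x N : pw N (oppT x) = - pw N x.
Proof. by rewrite /oppT pwE frobN. Qed.

Lemma pw_inv x N : pw N (invT x) = (pw N x)^-1.
Proof. by rewrite /invT pwE exprVn. Qed.

Lemma pw_cst N (a : F) : pw N (0%N, a) = a ^+ (p ^ N)%N.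
Proof. by rewrite pwE subn0. Qed.

Lemma pN_gt0 N : (0 < p ^ N)%N.
Proof. by rewrite expn_gt0 prime_gt0 ?(pcharf_prime hp). Qed.

Lemma pw0 N : pw N (0%N, 0) = 0.
Proof. by rewrite pw_cst expr0n eqn0Ngt pN_gt0. Qed.
Lemma pw1 N : pw N (0%N, 1) = 1.
Proof. by rewrite pw_cst expr1n. Qed.

Definition zeroK : K := \pi_K (0%N, 0).
Definition oneK : K := \pi_K (0%N, 1).
Definition addK (a b : K) : K := locked (\pi_K (addT (repr a) (repr b))).
Definition mulK (a b : K) : K := locked (\pi_K (mulT (repr a) (repr b))).
Definition oppK (a : K) : K := locked (\pi_K (oppT (repr a))).
Definition invK (a : K) : K := locked (\pi_K (invT (repr a))).

Lemma pi_pw u v N : \pi_K u = \pi_K v -> (u.1 <= N)%N -> (v.1 <= N)%N -> pw N u = pw N v.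
Proof. by move=> e h1 h2; apply/eqP; rewrite -pw_eqv // -eqK e. Qed.

Lemma pi_add x y : \pi_K (addT x y) = addK (\pi_K x) (\pi_K y).
Proof.
move: (reprK (\pi_K x)) (reprK (\pi_K y)); rewrite /addK -lock.
move: (repr (\pi_K x)) (repr (\pi_K y)) => x' y' ex ey.
apply: (@piK_eq _ _ (x.1 + y.1 + x'.1 + y'.1)%N) => //; rewrite ?lev /=; try lia.
rewrite !pw_add ?(pi_pw ex) ?(pi_pw ey) // ?lev; lia.
Qed.

Lemma pi_mul x y : \pi_K (mulT x y) = mulK (\pi_K x) (\pi_K y).
Proof.
move: (reprK (\pi_K x)) (reprK (\pi_K y)); rewrite /mulK -lock.
move: (repr (\pi_K x)) (repr (\pi_K y)) => x' y' ex ey.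
apply: (@piK_eq _ _ (x.1 + y.1 + x'.1 + y'.1)%N) => //; rewrite ?lev /=; try lia.
rewrite !pw_mul ?(pi_pw ex) ?(pi_pw ey) // ?lev; lia.
Qed.

Lemma pi_opp x : \pi_K (oppT x) = oppK (\pi_K x).
Proof.
move: (reprK (\pi_K x)); rewrite /oppK -lock.
move: (repr (\pi_K x)) => x' ex.
apply: (@piK_eq _ _ (x.1 + x'.1)%N) => //; rewrite ?lev /=; try lia.
rewrite !pw_opp ?(pi_pw ex) // ?lev; lia.
Qed.

Lemma pi_inv x : \pi_K (invT x) = invK (\pi_K x).
Proof.
move: (reprK (\pi_K x)); rewrite /invK -lock.
move: (repr (\pi_K x)) => x' ex.
apply: (@piK_eq _ _ (x.1 + x'.1)%N) => //; rewrite ?lev /=; try lia.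
rewrite !pw_inv ?(pi_pw ex) // ?lev; lia.
Qed.

Lemma addKA : associative addK.
Proof.
elim/quotW=> x; elim/quotW=> y; elim/quotW=> z; rewrite -!pi_add.
apply: (@piK_eq _ _ (x.1 + y.1 + z.1)%N) => //; rewrite ?lev /=; try lia.
by rewrite !pw_add ?lev /= ?addrA //; lia.
Qed.

Lemma addKC : commutative addK.
Proof.
elim/quotW=> x; elim/quotW=> y; rewrite -!pi_add.
apply: (@piK_eq _ _ (x.1 + y.1)%N) => //; rewrite ?lev /=; try lia.
by rewrite !pw_add ?lev /= 1?addrC //; lia.
Qed.

Lemma add0K : left_id zeroK addK.
Proof.
elim/quotW=> x; rewrite /zeroK -!pi_add.
apply: (@piK_eq _ _ (x.1)%N) => //; rewrite ?lev /=; try lia.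
by rewrite !pw_add ?lev /= ?pw0 ?add0r //; lia.
Qed.

Lemma addNK : left_inverse zeroK oppK addK.
Proof.
elim/quotW=> x; rewrite /zeroK -pi_opp -!pi_add.
apply: (@piK_eq _ _ (x.1 + x.1)%N) => //; rewrite ?lev /=; try lia.
by rewrite !pw_add ?lev /= ?pw_opp ?pw0 ?addNr //; lia.
Qed.

HB.instance Definition _ := GRing.isZmodule.Build K addKA addKC add0K addNK.

Lemma mulKA : associative mulK.
Proof.
elim/quotW=> x; elim/quotW=> y; elim/quotW=> z; rewrite -!pi_mul.
apply: (@piK_eq _ _ (x.1 + y.1 + z.1)%N) => //; rewrite ?lev /=; try lia.
by rewrite !pw_mul ?lev /= ?mulrA //; lia.
Qed.

Lemma mulKC : commutative mulK.
Proof.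
elim/quotW=> x; elim/quotW=> y; rewrite -!pi_mul.
apply: (@piK_eq _ _ (x.1 + y.1)%N) => //; rewrite ?lev /=; try lia.
by rewrite !pw_mul ?lev /= 1?mulrC //; lia.
Qed.

Lemma mul1K : left_id oneK mulK.
Proof.
elim/quotW=> x; rewrite /oneK -!pi_mul.
apply: (@piK_eq _ _ (x.1)%N) => //; rewrite ?lev /=; try lia.
by rewrite !pw_mul ?lev /= ?pw1 ?mul1r //; lia.
Qed.

Lemma mulKDl : left_distributive mulK addK.
Proof.
elim/quotW=> x; elim/quotW=> y; elim/quotW=> z.
rewrite -!pi_add -!pi_mul -!pi_add.
apply: (@piK_eq _ _ (x.1 + y.1 + z.1 + z.1)%N) => //; rewrite ?lev /=; try lia.
by rewrite ?pw_mul ?pw_add ?pw_mul ?lev /= ?mulrDl //; lia.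
Qed.

Lemma oneK_neq0 : oneK != 0.
Proof.
rewrite /oneK -[0]/zeroK /zeroK eqK /eqv /=.
by rewrite !expn0 !expr1 oner_eq0.
Qed.

HB.instance Definition _ := GRing.Zmodule_isComNzRing.Build K mulKA mulKC mul1K mulKDl oneK_neq0.

Lemma mulVK (a : K) : a != 0 -> mulK (invK a) a = 1.
Proof.
elim/quotW: a => x; rewrite -[0]/zeroK /zeroK eqK /eqv /= expn0 expr1.
rewrite expr0n eqn0Ngt pN_gt0 /= => hx.
rewrite -pi_inv -pi_mul -[1]/oneK /oneK.
apply: (@piK_eq _ _ (x.1 + x.1)%N) => //; rewrite ?lev /=; try lia.
rewrite pw_mul ?lev /= ?pw_inv ?pw1 ?mulVf //. all: try lia.
by rewrite /pw expf_neq0.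
Qed.

Lemma invK0 : invK 0 = 0.
Proof.
rewrite -[0]/zeroK {1}/zeroK -pi_inv /zeroK.
apply: (@piK_eq _ _ 0%N) => //; rewrite ?lev /=; try lia.
by rewrite pw_inv !pw0 invr0.
Qed.

HB.instance Definition _ := GRing.ComNzRing_isField.Build K mulVK invK0.

Definition iota (a : F) : K := \pi_K (0%N, a).

Lemma iota_is_zmod : zmod_morphism iota.
Proof.
move=> a b; rewrite /iota -[_ - _ in RHS]/(addK _ (oppK _)) -pi_opp -pi_add.
apply: (@piK_eq _ _ 0%N) => //; rewrite ?lev //;
  rewrite ?pw_add ?lev // ?pw_opp !pw_cst !expn0 !expr1.
Qed.

HB.instance Definition _ := GRing.isZmodMorphism.Build F K iota iota_is_zmod.

Lemma iota_is_monoid : monoid_morphism iota.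
Proof.
split => // a b; rewrite /iota -[_ * _ in RHS]/(mulK _ _) -pi_mul.
apply: (@piK_eq _ _ 0%N) => //; rewrite ?lev //;
  rewrite ?pw_mul ?lev // !pw_cst !expn0 !expr1.
Qed.

HB.instance Definition _ := GRing.isMonoidMorphism.Build F K iota iota_is_monoid.

Lemma pi_exp n (b : F) k : (\pi_K (n, b)) ^+ k = \pi_K (n, b ^+ k).
Proof.
elim: k => [|k IH]; first by rewrite !expr0; apply: (@piK_eq _ _ n) => //; rewrite pw1 /pw expr1n.
rewrite exprS IH -[GRing.mul _ _]/(mulK _ _) -pi_mul.
apply: (@piK_eq _ _ (n + n)%N) => //=; try lia.
by rewrite pw_mul //= /pw /= exprS exprMn.
Qed.

Lemma K_pchar : p \in [pchar K].
Proof. exact: (rmorph_pchar iota hp). Qed.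

Lemma K_perfect (a : K) : exists b : K, b ^+ p = a.
Proof.
elim/quotW: a => [[n b]]; exists (\pi_K (n.+1, b)); rewrite pi_exp.
apply: (@piK_eq _ _ n.+1) => //=.
by rewrite /pw /= subnn subSnn expn0 expr1 expn1.
Qed.

Lemma K_wr : weakly_rooted K.
Proof. by right; exists p; split; [exact: K_pchar | exact: K_perfect]. Qed.

Lemma perf_ex : exists (Fi : icField) (g : F -> Fi), rhom g /\ forall a, a != 0 -> g a != 0.
Proof.
exists (mk_icf K_wr), iota; split; last by move=> a ha; rewrite fmorph_eq0.
split; first exact: rmorphD.
split; first exact: rmorphM.
split; first exact: rmorphN.
by split; [exact: rmorph0 | exact: rmorph1].
Qed.

End Perf.

Section Prime.
Variables (R : comPzRingType) (x : R).
Hypothesis hx : x != 0.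
Hypothesis hred : forall (y : R) (n : nat), y ^+ n.+1 = 0 -> y = 0.

Lemma one_neq0 : (1 : R) != 0.
Proof. by apply: contraNneq hx => h; rewrite -[x]mulr1 h mulr0. Qed.

Definition Rn : Type := R.
HB.instance Definition _ := GRing.ComPzRing.on Rn.
HB.instance Definition _ := GRing.PzSemiRing_isNonZero.Build Rn one_neq0.


Definition IdP (A : set R) : Prop :=
  (forall a b, A a -> A b -> A (a + b)) /\ (forall r a, A a -> A (r * a)) /\
  (forall n, ~ A (x ^+ n)).

Lemma exA : exists A, IdP A /\ forall B, (A `<` B)%classic -> ~ IdP B.
Proof.
apply: Zorn_bigcup => Fm FP Ftot; split; [|split].
- move=> a b [X FX Xa] [Y FY Yb].
  have [XY|YX] := Ftot _ _ FX FY.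
  + by exists Y => //; apply: (FP _ FY).1 => //; apply: XY.
  + by exists X => //; apply: (FP _ FX).1 => //; apply: YX.
- by move=> r a [X FX Xa]; exists X => //; apply: (FP _ FX).2.1.
- by move=> n [X FX Xa]; apply: (FP _ FX).2.2 Xa.
Qed.

Definition A := projT1 (cid exA).
Lemma A_Id : IdP A. Proof. exact: (projT2 (cid exA)).1. Qed.
Lemma A_max B : (A `<` B)%classic -> ~ IdP B. Proof. exact: (projT2 (cid exA)).2. Qed.

Definition A0 (y : R) : Prop := A y \/ y = 0.

Lemma A0_add a b : A0 a -> A0 b -> A0 (a + b).
Proof.
case: A_Id => hadd _.
case=> [ha|->]; case=> [hb|->]; rewrite ?addr0 ?add0r; by [left; apply: hadd | left | left | right].
Qed.

Lemma A0_mul r a : A0 a -> A0 (r * a).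
Proof.
case: A_Id => _ [hmul _]; case=> [ha|->]; first by left; apply: hmul.
by right; rewrite mulr0.
Qed.

Lemma xn_neq0 n : x ^+ n != 0.
Proof.
case: n => [|n]; first by rewrite expr0 one_neq0.
by apply/eqP => /hred /eqP; apply/negP.
Qed.

Lemma A0_x n : ~ A0 (x ^+ n).
Proof. case=> [h|/eqP]; [exact: A_Id.2.2 h | exact/negP/xn_neq0]. Qed.

Lemma A0_ext u : ~ A0 u -> exists m a r, A0 a /\ x ^+ m = a + r * u.
Proof.
move=> hu; pose E := fun y => exists a r, A0 a /\ y = a + r * u.
have AE : (A `<` E)%classic.
  split; first by move=> y Ay; exists y, 0; split; [left|rewrite mul0r addr0].
  move=> EA; apply: hu; left; apply: EA; exists 0, 1; split; [by right|by rewrite add0r mul1r].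
have := A_max AE; rewrite /IdP.
have Eadd : forall a b, E a -> E b -> E (a + b).
  move=> _ _ [a [r [ha ->]]] [b [s [hb ->]]]; exists (a + b), (r + s); split.
    exact: A0_add.
  by rewrite mulrDl addrACA.
have Emul : forall r a, E a -> E (r * a).
  move=> r _ [a [s [ha ->]]]; exists (r * a), (r * s); split; first exact: A0_mul.
  by rewrite mulrDr mulrA.
move=> H; have : ~ (forall n, ~ E (x ^+ n)) by move=> h; apply: H.
move=> /existsNP [m /contrapT [a [r [ha e]]]]; by exists m, a, r.
Qed.

Lemma A0_prime u v : A0 (u * v) -> A0 u \/ A0 v.
Proof.
move=> huv; have [|/A0_ext [m [a [r [ha em]]]]] := pselect (A0 u); first by left.
have [|/A0_ext [k [b [s [hb ek]]]]] := pselect (A0 v); first by right.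
exfalso.
apply: (@A0_x (m + k)); rewrite exprD em ek.
rewrite mulrDl !mulrDr.
apply: A0_add; first apply: A0_add.
- by rewrite mulrC; apply: A0_mul.
- by rewrite mulrC; apply: A0_mul.
apply: A0_add; first by apply: A0_mul.
by rewrite mulrACA; apply: A0_mul.
Qed.

Definition Pb : {pred Rn} := fun y => `[< A0 y >].

Lemma Pb_ideal : idealr_closed Pb.
Proof.
split.
- by apply/asboolP; right.
- by apply/negP => /asboolP; rewrite -(expr0 x); apply: A0_x.
- move=> a u v /asboolP hu /asboolP hv; apply/asboolP.
  by apply: A0_add => //; apply: A0_mul.
Qed.

Lemma Pb_prime : prime_idealr_closed Pb.
Proof.
by move=> u v /asboolP /A0_prime [h|h]; apply/orP; [left|right]; apply/asboolP.
Qed.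

HB.instance Definition _ := isIdealr.Build Rn Pb Pb_ideal.
HB.instance Definition _ := isPrimeIdealrClosed.Build Rn Pb Pb_prime.

Lemma x_notin : x \notin Pb.
Proof. by apply/negP => /asboolP; rewrite -(expr1 x); apply: A0_x. Qed.

Definition Q := {ideal_quot (Pb : prime_idealr Rn)}.
HB.instance Definition _ := GRing.ComNzRing.on Q.

Definition unitQ : {pred Q} := fun q => `[< exists y : Q, y * q = 1 >].
Definition invQ (q : Q) : Q :=
  match pselect (exists y : Q, y * q = 1) with left h => projT1 (cid h) | right _ => q end.

Lemma mulVQ : {in unitQ, left_inverse 1 invQ *%R}.
Proof.
move=> q /asboolP hq; rewrite /invQ; case: pselect => // h.
exact: (projT2 (cid h)).
Qed.

Lemma unitPlQ : forall a b : Q, b * a = 1 -> unitQ a.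
Proof. by move=> a b h; apply/asboolP; exists b. Qed.

Lemma invr_outQ : {in [predC unitQ], invQ =1 id}.
Proof.
move=> q; rewrite inE => /negP hq; rewrite /invQ; case: pselect => // h.
by exfalso; apply: hq; apply/asboolP.
Qed.

HB.instance Definition _ := GRing.ComNzRing_hasMulInverse.Build Q mulVQ unitPlQ invr_outQ.

Lemma Q_integral : GRing.integral_domain_axiom Q.
Proof. exact: (@Quotient.rquot_IdomainAxiom Rn (Pb : prime_idealr Rn)). Qed.

HB.instance Definition _ := GRing.ComUnitRing_isIntegral.Build Q Q_integral.

Definition L := {fraction Q}.
Definition phi (r : R) : L := @FracField.tofrac Q (\pi_Q (r : Rn)).

Lemma phiD a b : phi (a + b) = phi a + phi b.
Proof. by rewrite /phi -rmorphD; congr (FracField.tofrac _); rewrite rmorphD. Qed.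
Lemma phiM a b : phi (a * b) = phi a * phi b.
Proof. by rewrite /phi -rmorphM; congr (FracField.tofrac _); rewrite rmorphM. Qed.
Lemma phiN a : phi (- a) = - phi a.
Proof. by rewrite /phi -rmorphN; congr (FracField.tofrac _); rewrite rmorphN. Qed.
Lemma phi0 : phi 0 = 0.
Proof. by rewrite /phi -(rmorph0 (@FracField.tofrac Q)); congr (FracField.tofrac _); rewrite rmorph0. Qed.
Lemma phi1 : phi 1 = 1.
Proof. by rewrite /phi -(rmorph1 (@FracField.tofrac Q)); congr (FracField.tofrac _); rewrite rmorph1. Qed.
Lemma phix : phi x != 0.
Proof.
rewrite /phi tofrac_eq0; apply: contra x_notin => /eqP h.
by rewrite -[x]subr0 Quotient.idealrBE h; apply/eqP; rewrite (rmorph0 (\pi_Q)).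
Qed.

Lemma prime_ex : exists (Fi : icField) (f : R -> Fi), rhom f /\ f x != 0.
Proof.
have hom : rhom phi by split; [exact: phiD | split; [exact: phiM | split; [exact: phiN | split; [exact: phi0 | exact: phi1]]]].
have [[p hp]|nc] := pselect (exists p, p \in [pchar L]).
  have [Fi [g [[gD [gM [gN [g0 g1]]]] gnz]]] := perf_ex hp.
  exists Fi, (fun r => g (phi r)); split; last exact: gnz phix.
  case: hom => [hD [hM [hN [h0 h1]]]].
  split; first by move=> a b; rewrite hD gD.
  split; first by move=> a b; rewrite hM gM.
  split; first by move=> a; rewrite hN gN.
  by split; [rewrite h0 g0 | rewrite h1 g1].
have wr : weakly_rooted L.
  by left => q; rewrite inE; apply/negP => hq; apply: nc; exists q.
by exists (mk_icf wr), phi; split; [exact: hom | exact: phix].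
Qed.
End Prime.

Lemma part1 (A : icAlg) : ICM A -> reduct_comRing A /\ reduct_reduced A.
Proof.
case=> I [F [h [hinj [hadd [hmul [hopp [h0 [h1 _]]]]]]]].
have E : forall (f g : forall i, F i), (forall i, f i = g i) -> f = g.
  by move=> f g H; apply: functional_extensionality_dep.
split; last first.
  have hpow : forall x n, h (ic_pow x n) = ic_pow (h x) n.
    by move=> x; elim=> [|n IH] //=; rewrite hmul IH.
  have cpow : forall (f : forall i, F i) n i,
      (ic_pow (A := prod_alg (fun i => alg_of_icField (F i))) f n) i = f i ^+ n.
    by move=> f; elim=> [|n IH] i //=; rewrite IH exprS.
  move=> x n hx; apply: hinj; rewrite h0; apply: E => i /=.
  have /(congr1 (fun f => f i)) := hpow x n.+1; rewrite hx h0 cpow /= => /esym/eqP.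
  by rewrite expf_eq0 /= => /eqP.
do !split.
- by move=> x y z; apply: hinj; rewrite !hadd; apply: E => i /=; rewrite addrA.
- by move=> x y; apply: hinj; rewrite !hadd; apply: E => i /=; rewrite addrC.
- by move=> x; apply: hinj; rewrite !hadd h0; apply: E => i /=; rewrite add0r.
- by move=> x; apply: hinj; rewrite !hadd hopp h0; apply: E => i /=; rewrite addNr.
- by move=> x y z; apply: hinj; rewrite !hmul; apply: E => i /=; rewrite mulrA.
- by move=> x y; apply: hinj; rewrite !hmul; apply: E => i /=; rewrite mulrC.
- by move=> x; apply: hinj; rewrite !hmul h1; apply: E => i /=; rewrite mul1r.
- by move=> x y z; apply: hinj; rewrite !hmul !hadd !hmul; apply: E => i /=; rewrite mulrDl.
Qed.

Theorem mainTheorem16 :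
  (forall A : icAlg, ICM A -> reduct_comRing A /\ reduct_reduced A) /\
  (forall R : comPzRingType, reduced_ring R ->
     exists (B : icAlg) (f : R -> B), ICM B /\ subring_embedding f).
Proof.
split; first exact: part1.
move=> R hred.
pose I := {y : R | y != 0}.
have ex : forall i : I, exists (Fi : icField) (f : R -> Fi), rhom f /\ f (sval i) != 0.
  by move=> [y hy]; exact: prime_ex.
pose Fi := fun i => projT1 (cid (ex i)).
have exf : forall i, exists f : R -> Fi i, rhom f /\ f (sval i) != 0.
  by move=> i; exact: (projT2 (cid (ex i))).
pose fi := fun i => projT1 (cid (exf i)).
have fiP : forall i, rhom (fi i) /\ fi i (sval i) != 0.
  by move=> i; exact: (projT2 (cid (exf i))).
pose B := prod_alg (fun i => alg_of_icField (Fi i)).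
exists B, (fun r i => fi i r).
have E : forall (f g : B), (forall i, f i = g i) -> f = g.
  by move=> f g H; apply: functional_extensionality_dep.
split.
  exists I, Fi, id; split; first by [].
  by do !split.
split.
  move=> a b eab; have [/eqP|hab] := eqVneq (a - b) 0; first by rewrite subr_eq0 => /eqP.
  exfalso.
  have := (fiP (exist _ (a - b) hab)).2; rewrite /=.
  case: (fiP (exist _ (a - b) hab)).1 => hD [_ [hN _]].
  by rewrite hD hN (congr1 (fun f => f (exist _ (a - b) hab)) eab) subrr eqxx.
split; first by move=> a b; apply: E => i /=; case: (fiP i).1.
split; first by move=> a b; apply: E => i /=; case: (fiP i).1 => _ [].
split; first by move=> a; apply: E => i /=; case: (fiP i).1 => _ [_ []].
split; first by apply: E => i /=; case: (fiP i).1 => _ [_ [_ []]].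
by apply: E => i /=; case: (fiP i).1 => _ [_ [_ []]].
Qed.
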